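(* Let $P,Q\in\mathbb P_d$ and $R=(1-t)P^{-1}+tQ^{-1}$ for some $t\in[0,1]$. Then $\operatorname{F}_R(P,Q)=\operatorname{F}^{\mathrm M}(P,Q)$.
   Context: $\mathbb P_d$ is the set of $d\times d$ complex positive definite matrices; $A\#B:=A^{1/2}(A^{-1/2}BA^{-1/2})^{1/2}A^{1/2}$. The generalized fidelity is $\operatorname{F}_R(P,Q):=\operatorname{Tr}\big[\sqrt{R^{1/2}PR^{1/2}}\,R^{-1}\sqrt{R^{1/2}QR^{1/2}}\big]$, and the Matsumoto fidelity is $\operatorname{F}^{\mathrm M}(P,Q):=\operatorname{Tr}[P\#Q]$. *)

(* Defs.v *)
From mathcomp Require Import all_boot all_order all_algebra.
From mathcomp Require Import complex.
From Stdlib Require Import ClassicalEpsilon.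
Set Implicit Arguments. Unset Strict Implicit. Unset Printing Implicit Defensive.
Import Order.TTheory GRing.Theory Num.Theory.
Local Open Scope ring_scope.

Section Defs.
Variable R : rcfType.
Local Notation C := R[i].

Definition adjmx (m n : nat) (A : 'M[C]_(m, n)) : 'M[C]_(n, m) :=
  (map_mx Num.conj A)^T.

Definition hermitian (d : nat) (A : 'M[C]_d) : Prop := adjmx A = A.

Definition posdef (d : nat) (A : 'M[C]_d) : Prop :=
  hermitian A /\
  forall v : 'cV[C]_d, v != 0 -> 0 < (adjmx v *m A *m v) ord0 ord0.

Definition possemidef (d : nat) (A : 'M[C]_d) : Prop :=
  hermitian A /\
  forall v : 'cV[C]_d, 0 <= (adjmx v *m A *m v) ord0 ord0.

(* the (unique) positive semidefinite square root of A (chosen by epsilon;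
   meaningful for A positive semidefinite) *)
Definition msqrt (d : nat) (A : 'M[C]_d) : 'M[C]_d :=
  epsilon (inhabits 0) (fun S : 'M[C]_d => possemidef S /\ S *m S = A).

Definition gmean (d : nat) (A B : 'M[C]_d) : 'M[C]_d :=
  msqrt A *m msqrt (invmx (msqrt A) *m B *m invmx (msqrt A)) *m msqrt A.

Definition genfid (d : nat) (Rm P Q : 'M[C]_d) : C :=
  \tr (msqrt (msqrt Rm *m P *m msqrt Rm) *m invmx Rm
        *m msqrt (msqrt Rm *m Q *m msqrt Rm)).

Definition matsfid (d : nat) (P Q : 'M[C]_d) : C := \tr (gmean P Q).

End Defs.

(* Main.v *)
Require Import Defs.
From mathcomp Require Import all_boot all_order all_algebra.
From mathcomp Require Import complex.
From mathcomp Require Import spectral sesquilinear.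
From Stdlib Require Import ClassicalEpsilon.
From mathcomp Require Import ring.
Import Order.TTheory GRing.Theory Num.Theory.
Set Implicit Arguments. Unset Strict Implicit. Unset Printing Implicit Defensive.
Local Open Scope ring_scope.

Section Aux.
Variable R : rcfType.
Local Notation C := R[i].
Implicit Types (n : nat).

Lemma adjmxE m n (A : 'M[C]_(m, n)) : adjmx A = (map_mx Num.conj A)^T.
Proof. by []. Qed.

Lemma adjmx_mul m n p (A : 'M[C]_(m, n)) (B : 'M[C]_(n, p)) :
  adjmx (A *m B) = adjmx B *m adjmx A.
Proof. by rewrite /adjmx map_mxM trmx_mul. Qed.

Lemma adjmxK m n (A : 'M[C]_(m, n)) : adjmx (adjmx A) = A.
Proof.
apply/matrixP => i j; rewrite !mxE; exact: conjCK.
Qed.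

Lemma adjmxD m n (A B : 'M[C]_(m, n)) : adjmx (A + B) = adjmx A + adjmx B.
Proof. by apply/matrixP => i j; rewrite !mxE rmorphD. Qed.

Lemma adjmxZ m n (c : C) (A : 'M[C]_(m, n)) : adjmx (c *: A) = c^* *: adjmx A.
Proof. by apply/matrixP => i j; rewrite !mxE rmorphM. Qed.

Lemma adjmx1 n : adjmx (1%:M : 'M[C]_n) = 1%:M.
Proof. by rewrite /adjmx map_mx1 trmx1. Qed.

Lemma adjmx_inv n (A : 'M[C]_n) : adjmx (invmx A) = invmx (adjmx A).
Proof. by rewrite /adjmx map_invmx trmx_inv. Qed.

Lemma adjmx_tC m n (A : 'M[C]_(m, n)) : adjmx A = (A ^t* )%sesqui.
Proof. by rewrite /adjmx map_trmx. Qed.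

Definition dg n (f : 'I_n -> C) : 'M[C]_n := diag_mx (\row_i f i).

Lemma dgM n (f g : 'I_n -> C) : dg f *m dg g = dg (fun i => f i * g i).
Proof. by rewrite /dg mulmx_diag; congr diag_mx; apply/rowP => i; rewrite !mxE. Qed.

Lemma dg1 n : dg (fun _ : 'I_n => 1) = 1%:M.
Proof. by apply/matrixP => i j; rewrite !mxE. Qed.

Lemma dgE n (f : 'I_n -> C) i j : dg f i j = f i *+ (i == j).
Proof. by rewrite !mxE. Qed.

Lemma adjmx_dg n (f : 'I_n -> C) : adjmx (dg f) = dg (fun i => (f i)^*).
Proof.
apply/matrixP => i j; rewrite !mxE eq_sym; case: eqP => [->|_]; rewrite ?mulr1n ?mulr0n ?rmorph0 //.
Qed.

Lemma dg_ext n (f g : 'I_n -> C) : (forall i, f i = g i) -> dg f = dg g.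
Proof. by move=> fg; apply/matrixP => i j; rewrite !dgE fg. Qed.

Lemma det_dg n (f : 'I_n -> C) : \det (dg f) = \prod_i f i.
Proof. by rewrite det_diag; apply: eq_bigr => i _; rewrite mxE. Qed.

Lemma dg_unit n (f : 'I_n -> C) : (forall i, f i != 0) -> dg f \in unitmx.
Proof.
move=> nz; rewrite unitmxE det_dg unitfE; apply/prodf_neq0 => i _; exact: nz.
Qed.


Lemma spectral_herm n (A : 'M[C]_n) : Defs.hermitian A ->
  exists (U : 'M[C]_n) (f : 'I_n -> C),
    [/\ U *m adjmx U = 1%:M, adjmx U *m U = 1%:M,
        (forall i, f i \is Num.real) & A = adjmx U *m dg f *m U].
Proof.
move=> hA.
have hs : A \is @hermitianmx _ n false Num.conj.
  by apply/is_hermitianmxP; rewrite expr0 scale1r -adjmx_tC hA.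
have /orthomx_spectralP AE := hermitian_normalmx hs.
have Uu := spectral_unitarymx A.
have real := hermitian_spectral_diag_real hs.
exists (spectralmx A), (fun i => spectral_diag A 0 i); split.
- by rewrite adjmx_tC; apply/unitarymxP.
- by apply: mulmx1C; rewrite adjmx_tC; apply/unitarymxP.
- by move=> i; exact: (mxOverP real).
- have -> : dg (fun i => spectral_diag A 0 i) = diag_mx (spectral_diag A).
    by congr diag_mx; apply/rowP => i; rewrite !mxE.
  by rewrite adjmx_tC -invmx_unitary //; exact: AE.
Qed.

Lemma form_dg m n (B : 'M[C]_(n, m)) (f : 'I_n -> C) (v : 'cV[C]_m) :
  (adjmx v *m (adjmx B *m dg f *m B) *m v) 0 0
  = \sum_i f i * `|(B *m v) i 0| ^+ 2.
Proof.
rewrite !mulmxA -adjmx_mul -mulmxA.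
set w := B *m v.
rewrite /dg mul_mx_diag !mxE; apply: eq_bigr => j _.
by rewrite !mxE normCKC mulrCA mulrA.
Qed.

Lemma cvec_norm_eq0 n (u : 'cV[C]_n) : \sum_i `|u i 0| ^+ 2 = 0 -> u = 0.
Proof.
move=> h; apply/matrixP => i j; rewrite ord1 mxE.
have := psumr_eq0P (fun i _ => exprn_ge0 2 (normr_ge0 (u i 0))) h (i := i) isT.
by move/eqP; rewrite sqrf_eq0 normr_eq0 => /eqP.
Qed.

Lemma adj_form n (u : 'cV[C]_n) : (adjmx u *m u) 0 0 = \sum_i `|u i 0| ^+ 2.
Proof.
by rewrite mxE; apply: eq_bigr => i _; rewrite !mxE normCKC.
Qed.


Lemma inv_uniq n (A B : 'M[C]_n) : A *m B = 1%:M -> invmx A = B.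
Proof.
move=> AB; have [Au _] := mulmx1_unit AB.
have : invmx A *m (A *m B) = invmx A by rewrite AB mulmx1.
by rewrite mulmxA mulVmx // mul1mx => ->.
Qed.

Lemma invmxM' n (A B : 'M[C]_n) : A \in unitmx -> B \in unitmx ->
  invmx (A *m B) = invmx B *m invmx A.
Proof.
move=> Au Bu; apply: inv_uniq.
by rewrite -mulmxA (mulmxA B) mulmxV // mul1mx mulmxV.
Qed.

Lemma dg_inv n (f : 'I_n -> C) : (forall i, f i != 0) ->
  invmx (dg f) = dg (fun i => (f i)^-1).
Proof.
move=> nz; apply: inv_uniq; rewrite dgM -dg1; apply: dg_ext => i.
by rewrite mulfV.
Qed.

Lemma psd_posdef n (A : 'M[C]_n) : posdef A -> possemidef A.
Proof.
move=> [h p]; split => // v; have [->|nz] := eqVneq v 0.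
  by rewrite mulmx0 mxE.
exact: ltW (p v nz).
Qed.

Lemma psd_congr m n (K : 'M[C]_m) (B : 'M[C]_(m, n)) :
  possemidef K -> possemidef (adjmx B *m K *m B).
Proof.
move=> [h p]; rewrite /possemidef; split.
  by rewrite /Defs.hermitian !adjmx_mul adjmxK h mulmxA.
move=> v.
have -> : adjmx v *m (adjmx B *m K *m B) *m v = adjmx (B *m v) *m K *m (B *m v).
  by rewrite adjmx_mul !mulmxA.
exact: p.
Qed.

Lemma psd_dg m n (B : 'M[C]_(m, n)) (f : 'I_m -> C) :
  (forall i, 0 <= f i) -> possemidef (adjmx B *m dg f *m B).
Proof.
move=> f0; apply: psd_congr; split.
  rewrite /Defs.hermitian adjmx_dg; apply: dg_ext => i.
  by apply: conj_Creal; apply: ger0_real.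
move=> v; rewrite /dg mul_mx_diag !mxE.
apply: sumr_ge0 => j _; rewrite !mxE -mulrA mulrC -mulrA; apply: mulr_ge0 => //.
by rewrite -normCK; exact: exprn_ge0.
Qed.


Lemma form_delta n (U : 'M[C]_n) (f : 'I_n -> C) i :
  U *m adjmx U = 1%:M ->
  let v := adjmx U *m delta_mx i (0 : 'I_1) in
  (adjmx v *m (adjmx U *m dg f *m U) *m v) 0 0 = f i.
Proof.
move=> UU v; rewrite form_dg /v mulmxA UU mul1mx (bigD1 i) //= big1 ?addr0.
  by rewrite mxE !eqxx /= normr1 expr1n mulr1.
by move=> j /negbTE ji; rewrite mxE ji /= normr0 expr0n /= mulr0.
Qed.

Lemma delta_neq0 n (U : 'M[C]_n) i : U *m adjmx U = 1%:M ->
  adjmx U *m delta_mx i (0 : 'I_1) != 0.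
Proof.
move=> UU; apply/eqP => /(congr1 (mulmx U)); rewrite mulmxA UU mul1mx mulmx0.
by move/matrixP/(_ i 0); rewrite !mxE !eqxx /= => /eqP; rewrite oner_eq0.
Qed.

Lemma psd_spectral n (A : 'M[C]_n) : possemidef A ->
  exists (U : 'M[C]_n) (f : 'I_n -> C),
    [/\ U *m adjmx U = 1%:M, adjmx U *m U = 1%:M,
        (forall i, 0 <= f i) & A = adjmx U *m dg f *m U].
Proof.
move=> [h p]; have [U [f [UU UU' _ AE]]] := spectral_herm h.
exists U, f; split => // i.
by have := p (adjmx U *m delta_mx i (0 : 'I_1)); rewrite AE form_delta.
Qed.

Lemma pd_spectral n (A : 'M[C]_n) : posdef A ->
  exists (U : 'M[C]_n) (f : 'I_n -> C),
    [/\ U *m adjmx U = 1%:M, adjmx U *m U = 1%:M,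
        (forall i, 0 < f i) & A = adjmx U *m dg f *m U].
Proof.
move=> [h p]; have [U [f [UU UU' _ AE]]] := spectral_herm h.
exists U, f; split => // i.
by have := p _ (delta_neq0 i UU); rewrite AE form_delta.
Qed.

Lemma unit_dg_congr n (U : 'M[C]_n) (f : 'I_n -> C) :
  U *m adjmx U = 1%:M -> (forall i, f i != 0) ->
  adjmx U *m dg f *m U \in unitmx.
Proof.
move=> UU nz; have [Uu Uu'] := mulmx1_unit UU.
by rewrite !unitmx_mul Uu Uu' dg_unit.
Qed.

Lemma pd_unit n (A : 'M[C]_n) : posdef A -> A \in unitmx.
Proof.
move=> /pd_spectral [U [f [UU _ fp ->]]]; apply: unit_dg_congr => // i.
by rewrite gt_eqF.
Qed.


Lemma sqrt_exists n (A : 'M[C]_n) : possemidef A ->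
  exists S, possemidef S /\ S *m S = A.
Proof.
move=> /psd_spectral [U [f [UU UU' f0 ->]]].
exists (adjmx U *m dg (fun i => sqrtC (f i)) *m U); split.
  by apply: psd_dg => i; rewrite sqrtC_ge0.
rewrite -!mulmxA (mulmxA U) UU mul1mx (mulmxA (dg _)) dgM !mulmxA; congr (_ *m _ *m _).
by apply: dg_ext => i; rewrite -expr2 sqrtCK.
Qed.

Lemma msqrt_spec n (A : 'M[C]_n) : possemidef A ->
  possemidef (msqrt A) /\ msqrt A *m msqrt A = A.
Proof.
move=> /sqrt_exists [S HS]; rewrite /msqrt.
exact: (epsilon_spec (inhabits 0) (fun S => possemidef S /\ S *m S = A) (ex_intro _ S HS)).
Qed.

Lemma sq_eig n (S : 'M[C]_n) (c : 'cV[C]_n) (l : C) : possemidef S -> 0 <= l ->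
  S *m (S *m c) = (l ^+ 2) *: c -> S *m c = l *: c.
Proof.
move=> [h p] l0 E.
set u := S *m c - l *: c.
have Su : S *m u = - l *: u.
  by rewrite /u mulmxBr E -scalemxAr scalerBr !scaleNr opprK scalerA -expr2 addrC.
have Nge0 : 0 <= (adjmx u *m u) 0 0.
  by rewrite adj_form; apply: sumr_ge0 => i _; exact: exprn_ge0.
have qge0 := p u.
have qE : (adjmx u *m S *m u) 0 0 = - l * (adjmx u *m u) 0 0.
  by rewrite -mulmxA Su -scalemxAr mxE.
have N0 : (adjmx u *m u) 0 0 = 0.
  have [l0'|lnz] := eqVneq l 0.
    have : u = S *m c by rewrite /u l0' scale0r subr0.
    move=> uE; have Su0 : S *m u = 0 by rewrite Su l0' oppr0 scale0r.
    by rewrite {1}uE adjmx_mul h -mulmxA Su0 mulmx0 mxE.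
  move: qge0; rewrite qE mulNr oppr_ge0 => le0.
  have : l * (adjmx u *m u) 0 0 == 0 by rewrite eq_le le0 mulr_ge0.
  by rewrite mulf_eq0 (negbTE lnz) => /eqP.
move: N0; rewrite adj_form => /cvec_norm_eq0 /eqP.
by rewrite /u subr_eq0 => /eqP.
Qed.

Lemma col_mulmx m n p (A : 'M[C]_(m, n)) (B : 'M[C]_(n, p)) j :
  col j (A *m B) = A *m col j B.
Proof. by rewrite !colE mulmxA. Qed.

Lemma psd_sqrt_unique n (S T : 'M[C]_n) : possemidef S -> possemidef T ->
  S *m S = T *m T -> S = T.
Proof.
move=> pS pT ST; have [U [f [UU UU' f0 TE]]] := psd_spectral pT.
set V := adjmx U.
have TV : T *m V = V *m dg f by rewrite TE -mulmxA UU mulmx1.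
have colf j : col j (V *m dg f) = f j *: col j V.
  by apply/matrixP => i k; rewrite /dg mul_mx_diag !mxE mulrC.
have SV : S *m V = V *m dg f.
  apply/matrixP => i j.
  have Tc : T *m col j V = f j *: col j V by rewrite -col_mulmx TV colf.
  have Sc : S *m col j V = f j *: col j V.
    apply: sq_eig => //; rewrite mulmxA ST -mulmxA Tc -scalemxAr Tc scalerA -expr2 //.
  have := congr1 (fun M : 'cV[C]_n => M i 0) Sc.
  by rewrite -col_mulmx -colf !mxE.
by rewrite -[S]mulmx1 -UU' -/V mulmxA SV TE.
Qed.

Lemma msqrt_unique n (A S : 'M[C]_n) : possemidef S -> S *m S = A -> msqrt A = S.
Proof.
move=> pS SA.
have [p1 p2] := epsilon_spec (inhabits 0) (fun S => possemidef S /\ S *m S = A)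
  (ex_intro _ S (conj pS SA)).
by apply: psd_sqrt_unique => //; rewrite p2 SA.
Qed.

End Aux.

Local Open Scope ring_scope.

Section Gen.
Variable F : comUnitRingType.

Lemma inv_uniqG n (A B : 'M[F]_n) : A *m B = 1%:M -> invmx A = B.
Proof.
move=> AB; have [Au _] := mulmx1_unit AB.
have : invmx A *m (A *m B) = invmx A by rewrite AB mulmx1.
by rewrite mulmxA mulVmx // mul1mx => ->.
Qed.

Lemma alg_core n (r B aB aBi Bi H G W GH : 'M[F]_n) :
  r \in unitmx -> aB *m aBi = 1%:M -> Bi *m B = 1%:M -> GH *m W *m H = G ->
  r *m r = aBi *m W *m Bi ->
  \tr (r *m (B *m H *m aB) *m r *m invmx (r *m r) *m (r *m (B *m GH *m aB) *m r))
  = \tr (aB *m B *m G).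
Proof.
move=> ru h1 h2 h3 rr.
have ri : invmx (r *m r) = invmx r *m invmx r.
  apply: inv_uniqG.
  by rewrite !mulmxA -(mulmxA r r) mulmxV // mulmx1 mulmxV.
rewrite ri -!mulmxA (mulmxA r (invmx r)) mulmxV // mul1mx.
rewrite (mulmxA (invmx r) r) mulVmx // mul1mx.
rewrite mxtrace_mulC -!mulmxA rr !mulmxA -(mulmxA _ aB aBi) h1 mulmx1.
rewrite -!mulmxA mxtrace_mulC !mulmxA -(mulmxA _ Bi B) h2 mulmx1.
rewrite -!mulmxA mxtrace_mulC !mulmxA -(mulmxA _ GH) -(mulmxA _ (GH *m W)) h3.
by [].
Qed.

Lemma alg_sq n (r B aB aBi Bi D W E : 'M[F]_n) :
  aB *m aBi = 1%:M -> Bi *m B = 1%:M -> D *m W *m D = E ->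
  r *m r = aBi *m W *m Bi ->
  r *m (B *m D *m aB) *m r *m (r *m (B *m D *m aB) *m r) = r *m (B *m E *m aB) *m r.
Proof.
move=> h1 h2 h3 rr.
rewrite -!mulmxA (mulmxA r r) rr !mulmxA.
by rewrite -(mulmxA _ aB aBi) h1 mulmx1 -(mulmxA _ Bi B) h2 mulmx1 -h3 !mulmxA.
Qed.

Lemma alg_Q n (p pi Q G aV V D : 'M[F]_n) :
  p *m pi = 1%:M -> pi *m p = 1%:M -> G *m G = pi *m Q *m pi ->
  G = aV *m D *m V -> V *m aV = 1%:M ->
  Q = (p *m aV) *m (D *m D) *m (V *m p).
Proof.
move=> h1 h2 GG GE VV.
have -> : Q = p *m (pi *m Q *m pi) *m p.
  by rewrite !mulmxA h1 mul1mx -mulmxA h2 mulmx1.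
rewrite -GG GE !mulmxA -(mulmxA _ V aV) VV mulmx1.
by rewrite -!mulmxA.
Qed.

Lemma alg_P n (p aV V : 'M[F]_n) :
  aV *m V = 1%:M -> p *m p = (p *m aV) *m (V *m p).
Proof. by move=> h; rewrite -mulmxA (mulmxA aV) h mul1mx. Qed.

Lemma alg_tr n (p aV V D : 'M[F]_n) :
  \tr (p *m (aV *m D *m V) *m p) = \tr ((V *m p) *m (p *m aV) *m D).
Proof.
by rewrite mxtrace_mulC !mulmxA mxtrace_mulC !mulmxA mxtrace_mulC !mulmxA.
Qed.

Lemma alg_inv n (B aB aBi Bi D D' : 'M[F]_n) :
  aB *m aBi = 1%:M -> D *m D' = 1%:M -> B *m Bi = 1%:M ->
  (B *m D *m aB) *m (aBi *m D' *m Bi) = 1%:M.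
Proof.
move=> h1 h2 h3; rewrite -!mulmxA (mulmxA aB) h1 mul1mx (mulmxA D) h2 mul1mx h3.
by [].
Qed.

Lemma alg_lin n (a b : F) (X Y D : 'M[F]_n) :
  a *: (X *m Y) + b *: (X *m D *m Y) = X *m (a *: 1%:M + b *: D) *m Y.
Proof.
by rewrite mulmxDr mulmxDl -!scalemxAr -!scalemxAl mulmx1.
Qed.

End Gen.

Section Main.
Variable R : rcfType.
Local Notation C := R[i].

Lemma herm_psd n (A : 'M[C]_n) : possemidef A -> adjmx A = A.
Proof. by case. Qed.

Lemma unit_sq n (A : 'M[C]_n) : A *m A \in unitmx -> A \in unitmx.
Proof. by rewrite unitmx_mul => /andP[]. Qed.

Lemma dg_unitP n (f : 'I_n -> C) : dg f \in unitmx -> forall i, f i != 0.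
Proof.
rewrite unitmxE det_dg unitfE => /prodf_neq0 h i; exact: h.
Qed.

Lemma dg_lin n (a b : C) (f : 'I_n -> C) :
  a *: 1%:M + b *: dg f = dg (fun i => a + b * f i).
Proof.
apply/matrixP => i j; rewrite !mxE; case: eqP => _; rewrite ?mulr1n ?mulr0n.
  by rewrite mulr1.
by rewrite !mulr0 addr0.
Qed.

Lemma sqrt_ident n (B r : 'M[C]_n) (w f e : 'I_n -> C) :
  B \in unitmx -> possemidef r ->
  r *m r = adjmx (invmx B) *m dg w *m invmx B ->
  (forall i, 0 <= f i) -> (forall i, f i * w i * f i = e i) ->
  msqrt (r *m (B *m dg e *m adjmx B) *m r) = r *m (B *m dg f *m adjmx B) *m r.
Proof.
move=> Bu pr rr f0 fwf; apply: msqrt_unique.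
  rewrite -{1}(herm_psd pr); apply: psd_congr.
  by rewrite -{1}(adjmxK B); apply: psd_dg.
apply: alg_sq rr.
- by rewrite -adjmx_mul mulVmx // adjmx1.
- by rewrite mulVmx.
- by rewrite !dgM; apply: dg_ext.
Qed.

Lemma inv_congr n (B : 'M[C]_n) (e : 'I_n -> C) :
  B \in unitmx -> (forall i, e i != 0) ->
  invmx (B *m dg e *m adjmx B) = adjmx (invmx B) *m dg (fun i => (e i)^-1) *m invmx B.
Proof.
move=> Bu enz; apply: inv_uniq; apply: alg_inv.
- by rewrite -adjmx_mul mulVmx // adjmx1.
- by rewrite dgM -dg1; apply: dg_ext => i; rewrite mulfV.
- by rewrite mulmxV.
Qed.

End Main.

Section Main2.
Variable R : rcfType.
Local Notation C := R[i].
Local Open Scope complex_scope.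

Lemma rc_ge0 (t : R) : (0 <= t)%R -> (0 <= t%:C)%R.
Proof. by move=> h; rewrite -lecR in h. Qed.

Lemma rc_eq0 (t : R) : (t%:C == 0)%R = (t == 0)%R.
Proof. by rewrite -(rmorph0 (real_complex R)) (inj_eq (@complexI R)). Qed.

Lemma main_aux n (P Q : 'M[R[i]]_n) (t : R) :
  posdef P -> posdef Q -> 0 <= t <= 1 ->
  genfid ((1 - t)%:C *: invmx P + t%:C *: invmx Q) P Q = matsfid P Q.
Proof.
move=> pP pQ /andP[t0 t1].
rewrite /matsfid /gmean /genfid.
have Pps := psd_posdef pP.
have [pp1 pp2] := msqrt_spec Pps.
set p := msqrt P in pp1 pp2 *.
have hp := herm_psd pp1.
have Pu := pd_unit pP.
have pu : p \in unitmx by apply: unit_sq; rewrite pp2.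
set pi := invmx p.
have hpi : adjmx pi = pi by rewrite /pi adjmx_inv hp.
have Q'ps : possemidef (pi *m Q *m pi).
  by rewrite -{1}hpi; apply: psd_congr; apply: psd_posdef.
have [gg1 gg2] := msqrt_spec Q'ps.
set G := msqrt (pi *m Q *m pi) in gg1 gg2 *.
have Qu := pd_unit pQ.
have Gu : G \in unitmx.
  by apply: unit_sq; rewrite gg2 !unitmx_mul Qu unitmx_inv pu.
have [V [g [VV VV' g0 GE]]] := psd_spectral gg1.
have gnz : forall i, g i != 0.
  apply: dg_unitP; move: Gu; rewrite GE !unitmx_mul => /andP[/andP[_ ->]].
  by [].
have gpos i : 0 < g i by rewrite lt_def gnz g0.
set B := p *m adjmx V.
have aB : adjmx B = V *m p by rewrite /B adjmx_mul adjmxK hp.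
have aVu : adjmx V \in unitmx by have [h _] := mulmx1_unit VV'.
have Vu : V \in unitmx by have [_ h] := mulmx1_unit VV'.
have Bu : B \in unitmx by rewrite unitmx_mul pu aVu.
have aBu : adjmx B \in unitmx by rewrite aB unitmx_mul Vu pu.
have PE : P = B *m dg (fun=> 1) *m adjmx B.
  by rewrite dg1 mulmx1 aB -pp2; exact: alg_P.
have QE : Q = B *m dg (fun i => g i * g i) *m adjmx B.
  rewrite aB -dgM; apply: alg_Q gg2 GE VV.
    by rewrite /pi mulmxV.
  by rewrite /pi mulVmx.
set Bi := invmx B.
pose w i := (1 - t)%:C + t%:C * (g i * g i)^-1.
have wpos i : 0 < w i.
  have z : 0 < (g i * g i)^-1 by rewrite invr_gt0 mulr_gt0.
  have t0' := rc_ge0 t0.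
  have t1' : 0 <= (1 - t)%:C by apply: rc_ge0; rewrite subr_ge0.
  rewrite lt_def; apply/andP; split; last by rewrite addr_ge0 // mulr_ge0 // ltW.
  rewrite paddr_eq0 //; last by rewrite mulr_ge0 // ltW.
  apply/negP => /andP[/eqP [] e1]; rewrite mulf_eq0 (gt_eqF z) orbF => /eqP [] e2.
  by move: e1; rewrite e2 subr0 => /eqP; rewrite oner_eq0.
have RmE : (1 - t)%:C *: invmx P + t%:C *: invmx Q = adjmx Bi *m dg w *m Bi.
  have nz1 : forall i : 'I_n, (fun=> 1 : C) i != 0 by move=> i; exact: oner_neq0.
  have nz2 : forall i, (fun i => g i * g i) i != 0 by move=> i; rewrite mulf_neq0.
  rewrite {1}PE {1}QE (inv_congr Bu nz1) (inv_congr Bu nz2).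
  rewrite (@dg_ext _ _ (fun=> _^-1) (fun=> 1)); last by move=> i; rewrite invr1.
  by rewrite dg1 mulmx1 alg_lin dg_lin.
rewrite RmE.
have Rps : possemidef (adjmx Bi *m dg w *m Bi) by apply: psd_dg => i; exact: ltW.
have [rr1 rr2] := msqrt_spec Rps.
set r := msqrt (adjmx Bi *m dg w *m Bi) in rr1 rr2 *.
have Rmu : adjmx Bi *m dg w *m Bi \in unitmx.
  rewrite !unitmx_mul /Bi adjmx_inv !unitmx_inv aBu Bu dg_unit // => i.
  by rewrite gt_eqF.
have ru : r \in unitmx by apply: unit_sq; rewrite rr2.
pose h i := (sqrtC (w i))^-1.
have wnz i : w i != 0 by rewrite gt_eqF.
have hwh i : h i * w i * h i = 1.
  by rewrite /h mulrAC -expr2 exprVn sqrtCK mulVf.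
have h0 i : 0 <= h i by rewrite /h invr_ge0 sqrtC_ge0 ltW.
rewrite {1}PE {1}QE.
rewrite (sqrt_ident (f := h) Bu rr1 rr2 h0 hwh).
have gh0 i : 0 <= g i * h i by rewrite mulr_ge0.
have ghw i : (g i * h i) * w i * (g i * h i) = g i * g i.
  rewrite -(mulr1 (g i * g i)) -(hwh i).
  by ring.
rewrite (sqrt_ident (f := fun i => g i * h i) Bu rr1 rr2 gh0 ghw).
rewrite -rr2.
rewrite (@alg_core _ _ r B (adjmx B) (adjmx Bi) Bi (dg h) (dg g) (dg w)
   (dg (fun i => g i * h i)) ru).
- by rewrite GE alg_tr aB.
- by rewrite -adjmx_mul /Bi mulVmx // adjmx1.
- by rewrite /Bi mulVmx.
- rewrite !dgM; apply: dg_ext => i.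
  by rewrite -!mulrA (mulrA (h i)) hwh mulr1.
- by [].
Qed.

End Main2.

Local Open Scope ring_scope.
Local Open Scope complex_scope.

Theorem mainTheorem11 (R : rcfType) (d : nat) (P Q : 'M[R[i]]_d) (t : R) :
  posdef P -> posdef Q -> 0 <= t <= 1 ->
  genfid ((1 - t)%:C *: invmx P + t%:C *: invmx Q) P Q = matsfid P Q.
Proof. exact: main_aux. Qed.
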